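(* Let $G$ be a finite connected simple graph with $n$ vertices and $m$ edges, and let $a,b\in\mathbb{C}$, $c=a-b$. Let $\mathbf d:\ell^2(R(G))\to\ell^2(V(G))$ be a linear map with $\mathbf d\mathbf d^*=\mathbf I_n$, put $\mathbf C=a\,\mathbf d^*\mathbf d+b(\mathbf I_{2m}-\mathbf d^*\mathbf d)$ and $\mathbf U=\mathbf S\mathbf C$. Then for every $u\in\mathbb{C}$ with $b^2u^2\neq 1$, \[ \det(\mathbf I_{2m}-u\mathbf U)=(1-b^2u^2)^{m-n}\det\big((1-abu^2)\mathbf I_n-cu\,\mathbf d\mathbf S\mathbf d^*\big). \] Equivalently, the zeta function $\zeta(G,u)=\det(\mathbf I_{2m}-u\mathbf U)^{-1}$ satisfies $\zeta(G,u)^{-1}=(1-b^2u^2)^{m-n}\det((1-abu^2)\mathbf I_n-cu\,\mathbf d\mathbf S\mathbf d^* )$.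
   Context: For a simple graph $G$, $R(G)=\{(u,v),(v,u): uv\in E(G)\}$ is the set of arcs (so $|R(G)|=2m$); for $e=(u,v)$, $e^{-1}=(v,u)$. $\ell^2(V(G))\cong\mathbb{C}^n$ and $\ell^2(R(G))\cong\mathbb{C}^{2m}$ are the spaces of complex functions on vertices and arcs with the standard inner product; $\mathbf d^*$ denotes the adjoint of $\mathbf d$. $\mathbf S$ is the arc-reversal operator on $\ell^2(R(G))$: $(\mathbf S\omega)(e)=\omega(e^{-1})$. $\mathbf I_k$ is the identity of size $k$. The matrix $\mathbf U=\mathbf S\mathbf C$ is the time evolution matrix of a ''general coined quantum walk'' on $G$. *)

(* Defs.v *)
From HB Require Import structures.
From mathcomp Require Import all_boot all_order all_algebra.
Set Implicit Arguments. Unset Strict Implicit. Unset Printing Implicit Defensive.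
Import Order.TTheory GRing.Theory Num.Theory.
Local Open Scope ring_scope.

(* A simple graph is a symmetric irreflexive relation [e] on a finType [V].
   Arcs R(G): ordered pairs (u,v) with uv an edge. *)
Definition arcs (V : finType) (e : rel V) : finType := {p : V * V | e p.1 p.2}.

Definition connected_graph (V : finType) (e : rel V) : Prop :=
  forall x y : V, connect e x y.

(* Number of edges m: |R(G)| = 2m. *)
Definition nedges (V : finType) (e : rel V) : nat := (#|arcs e| %/ 2)%N.

(* Arc-reversal operator S on l^2(R(G)), as a matrix indexed by the
   enumeration of arcs: (S w)(x) = w(x^{-1}), i.e. S_{x,y} = [y = x^{-1}]. *)
Definition arcS (R : nzRingType) (V : finType) (e : rel V) : 'M[R]_#|arcs e| :=
  \matrix_(i, j) (((val (enum_val j : arcs e)).1 == (val (enum_val i : arcs e)).2)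
                 && ((val (enum_val j : arcs e)).2 == (val (enum_val i : arcs e)).1))%:R.

Definition adjmx (R : numClosedFieldType) m n (A : 'M[R]_(m, n)) : 'M[R]_(n, m) :=
  map_mx Num.conj A^T.

(* Main.v *)
Require Import Defs.
From HB Require Import structures.
From mathcomp Require Import all_boot all_order all_algebra.
From mathcomp Require Import fingroup perm.
From mathcomp Require Import ring.
Set Implicit Arguments. Unset Strict Implicit. Unset Printing Implicit Defensive.
Import Order.TTheory GRing.Theory Num.Theory.
Local Open Scope ring_scope.

Definition arev (V : finType) (e : rel V) (esym : symmetric e) (x : arcs e) : arcs e :=
  @exist (V * V) (fun p => e p.1 p.2) ((val x).2, (val x).1)
    (eq_ind _ (fun b => b = true) (valP x) _ (esym _ _)).

Lemma arevK (V : finType) (e : rel V) (esym : symmetric e) : involutive (arev esym).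
Proof. by move=> x; apply: val_inj; case: x => [[x1 x2] ?]. Qed.

Lemma arev_neq (V : finType) (e : rel V) (esym : symmetric e) (eirr : irreflexive e) (x : arcs e) :
  arev esym x != x.
Proof.
apply/eqP => /(congr1 val); case: x => [[x1 x2] /= h] [] E.
by move: h; rewrite E eirr.
Qed.

Definition sfun (V : finType) (e : rel V) (esym : symmetric e) (i : 'I_(#|arcs e|)) : 'I_(#|arcs e|) :=
  enum_rank (arev esym (enum_val i)).

Lemma sfunK (V : finType) (e : rel V) (esym : symmetric e) : involutive (sfun esym).
Proof. by move=> i; rewrite /sfun enum_rankK arevK enum_valK. Qed.

Definition sperm (V : finType) (e : rel V) (esym : symmetric e) : 'S_(#|arcs e|) :=
  perm (can_inj (sfunK esym)).

Lemma spermE (V : finType) (e : rel V) (esym : symmetric e) i : sperm esym i = sfun esym i.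
Proof. by rewrite permE. Qed.

Lemma sfun_neq (V : finType) (e : rel V) (esym : symmetric e) (eirr : irreflexive e) i :
  sfun esym i != i.
Proof.
apply/eqP => E; have := @arev_neq _ _ esym eirr (enum_val i).
by rewrite -{2}E /sfun enum_rankK eqxx.
Qed.

Lemma arcS_perm (R : nzRingType) (V : finType) (e : rel V) (esym : symmetric e) :
  arcS R e = perm_mx (sperm esym).
Proof.
apply/matrixP => i j; rewrite /arcS !mxE spermE /sfun.
congr (_%:R); congr (nat_of_bool _).
apply/idP/idP.
  move/andP=> [/eqP h1 /eqP h2]; apply/eqP.
  rewrite -[j]enum_valK; congr enum_rank; apply: val_inj => /=.
  by case: (enum_val j) h1 h2 => [[p1 p2] hp] /= -> ->.
move/eqP => <-; rewrite enum_rankK /=; by rewrite !eqxx.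
Qed.

Lemma arcS_invol (R : nzRingType) (V : finType) (e : rel V) (esym : symmetric e) :
  arcS R e *m arcS R e = 1%:M.
Proof.
rewrite (arcS_perm _ esym) -perm_mxM.
have -> : (sperm esym * sperm esym = 1)%g.
  by apply/permP => i; rewrite permM !spermE sfunK perm1.
by rewrite perm_mx1.
Qed.

Lemma card_arcs_even (V : finType) (e : rel V) (esym : symmetric e) (eirr : irreflexive e) :
  #|arcs e| = (nedges e).*2.
Proof.
pose s := sperm esym.
pose A := [set i : 'I_(#|arcs e|) | (i < s i)%N].
have hC : ~: A = s @: A.
  apply/eqP; rewrite eqEsubset; apply/andP; split; apply/subsetP.
    move=> i; rewrite in_setC inE -leqNgt => hi.
    have hne := @sfun_neq _ _ esym eirr i.
    have lt : (s i < i)%N by rewrite ltn_neqAle hi andbT spermE.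
    apply/imsetP; exists (s i); first by rewrite inE /s !spermE sfunK -spermE.
    by rewrite /s !spermE sfunK.
  move=> x /imsetP [j]; rewrite inE => hj ->.
  by rewrite in_setC inE /s !spermE sfunK -leqNgt ltnW // -spermE.
have := cardsC A; rewrite card_ord.
rewrite hC card_imset; last exact: perm_inj.
have aux : forall n k, (k + k = n -> n = (n %/ 2).*2)%N.
  by move=> n k <-; rewrite addnn divn2 doubleK.
exact: aux.
Qed.

Lemma arcS_sq_fact (R : comNzRingType) (V : finType) (e : rel V) (esym : symmetric e) (x : R) :
  (1%:M - x *: arcS R e) *m (1%:M + x *: arcS R e) = (1 - x ^+ 2) *: 1%:M.
Proof.
rewrite mulmxDr mulmx1 mulmxBl mul1mx -scalemxAl -scalemxAr (arcS_invol _ esym) scalerA.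
rewrite scalerBl scale1r -expr2; set M := x *: _.
by rewrite addrA subrK.

Qed.

Lemma det_flip (R : comNzRingType) (V : finType) (e : rel V) (esym : symmetric e)
   (eirr : irreflexive e) (x : R) :
  \det (1%:M + x *: arcS R e) = \det (1%:M - x *: arcS R e).
Proof.
pose s := sperm esym.
pose sg := \row_(i < #|arcs e|) (if (i < s i)%N then 1 else -1 : R).
pose D := diag_mx sg.
have DD : D *m D = 1%:M.
  rewrite mulmx_diag; apply/matrixP => i j; rewrite !mxE.
  by case: (i < s i)%N; rewrite ?mulr1 ?mulrNN ?mulr1.
have DSD : D *m arcS R e *m D = - arcS R e.
  rewrite mul_diag_mx mul_mx_diag (arcS_perm _ esym); apply/matrixP => i j; rewrite !mxE.
  have [<-|ne] := eqVneq (s i) j; last by rewrite mulr0 mul0r oppr0.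
  have hne := @sfun_neq _ _ esym eirr i.
  rewrite /s !spermE sfunK mulr1.
  have [lt|ge] := ltnP i (sfun esym i).
    by rewrite ltnNge ltnW // mulrN1.
  have lt : (sfun esym i < i)%N by rewrite ltn_neqAle hne ge.
  by rewrite lt mulN1r.
have -> : 1%:M + x *: arcS R e = D *m (1%:M - x *: arcS R e) *m D.
  by rewrite mulmxBr mulmx1 mulmxBl DD -scalemxAr -scalemxAl DSD scalerN opprK.
by rewrite !det_mulmx mulrC mulrA -det_mulmx DD det1 mul1r.

Qed.

Lemma det_1mS (R : numClosedFieldType) (V : finType) (e : rel V) (esym : symmetric e)
   (eirr : irreflexive e) (t : R) :
  \det (1%:M - t *: arcS R e) = (1 - t ^+ 2) ^+ (nedges e).
Proof.
pose p : {poly R} := \det (1%:M - 'X *: arcS {poly R} e).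
pose r : {poly R} := (1 - 'X ^+ 2) ^+ (nedges e).
have hp : p * p = r * r.
  rewrite {2}/p -(@det_flip _ _ _ esym eirr) -det_mulmx (arcS_sq_fact esym) detZ det1 mulr1.
  by rewrite (card_arcs_even esym eirr) -muln2 exprM expr2.
have ev : forall x : R, p.[x] = \det (1%:M - x *: arcS R e).
  move=> x; rewrite /p -horner_evalE -det_map_mx; congr (\det _).
  apply/matrixP => i j; rewrite !mxE /=.
  by rewrite rmorphB rmorphM !rmorph_nat -[_ 'X]/('X.[x]) hornerX.
have : (p - r) * (p + r) = 0.
  by rewrite mulrDr !mulrBl hp [r * p]mulrC addrA subrK subrr.
rewrite -ev; move/eqP; rewrite mulf_eq0 => /orP [|].
  by rewrite subr_eq0 => /eqP ->; rewrite /r !hornerE.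
rewrite addr_eq0 => /eqP hpr; exfalso.
have := ev 0; rewrite hpr scale0r subr0 det1 /r !hornerE expr0n /= subr0 expr1n.
move/eqP; rewrite eq_sym -subr_eq0 opprK -mulr2n pnatr_eq0.
done.
Qed.

Lemma sylvester (R : comNzRingType) p q (X : 'M[R]_(p, q)) (Y : 'M[R]_(q, p)) :
  \det (1%:M - X *m Y) = \det (1%:M - Y *m X).
Proof.
have E1 : block_mx 1%:M X Y 1%:M = block_mx 1%:M 0 Y 1%:M *m block_mx 1%:M X 0 (1%:M - Y *m X).
  rewrite mulmx_block !mul1mx !mul0mx ?mulmx1 ?mulmx0 ?add0r ?addr0.
  by rewrite addrC subrK.
have E2 : block_mx 1%:M X Y 1%:M = block_mx (1%:M - X *m Y) X 0 1%:M *m block_mx 1%:M 0 Y 1%:M.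
  rewrite mulmx_block !mul1mx !mul0mx ?mulmx1 ?mulmx0 ?add0r ?addr0.
  by rewrite subrK.
have := congr1 determinant (etrans (esym E1) E2).
by rewrite !det_mulmx !(det_lblock, det_ublock) !det1 !mul1r !mulr1 => ->.
Qed.

Theorem theorem5 (R : numClosedFieldType) (V : finType) (e : rel V)
  (esym : symmetric e) (eirr : irreflexive e) (econn : connected_graph e)
  (a b : R) (d : 'M[R]_(#|V|, #|arcs e|)) (hd : d *m adjmx d = 1%:M)
  (u : R) (hu : b ^+ 2 * u ^+ 2 != 1) :
  let c := a - b in
  let C := a *: (adjmx d *m d) + b *: (1%:M - adjmx d *m d) in
  let U := arcS R e *m C in
  \det (1%:M - u *: U) =
    (1 - b ^+ 2 * u ^+ 2) ^ ((nedges e)%:Z - (#|V|)%:Z)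
    * \det ((1 - a * b * u ^+ 2) *: 1%:M - (c * u) *: (d *m arcS R e *m adjmx d)).
Proof.
move=> c C U.
set S := arcS R e.
set Ad := adjmx d.
set k := 1 - b ^+ 2 * u ^+ 2.
have kn0 : k != 0 by rewrite subr_eq0 eq_sym.
set A := 1%:M - (b * u) *: S.
set Ai := k^-1 *: (1%:M + (b * u) *: S).
have AAi : A *m Ai = 1%:M.
  by rewrite /Ai -scalemxAr (arcS_sq_fact esym) exprMn -/k scalerA mulVf // scale1r.
have EC : S *m C = b *: S + c *: (S *m Ad *m d).
  rewrite /C mulmxDr -!scalemxAr mulmxBr mulmx1 scalerBr /c scalerBl addrCA -mulmxA.
  done.
have EU : 1%:M - u *: U = A *m (1%:M - ((c * u) *: (Ai *m S *m Ad)) *m d).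
  rewrite mulmxBr mulmx1 -scalemxAl -scalemxAr !mulmxA AAi mul1mx.
  rewrite /U EC scalerDr !scalerA opprD addrA /A [u * b]mulrC [u * c]mulrC.
  done.
set D := d *m S *m Ad.
have E3 : d *m (Ai *m S *m Ad) = k^-1 *: (D + (b * u) *: 1%:M).
  rewrite /Ai -!scalemxAl -scalemxAr mulmxDl mul1mx -scalemxAl (arcS_invol _ esym).
  rewrite mulmxDl mulmxDr -scalemxAl -scalemxAr mul1mx hd /D !mulmxA.
  done.
set M := (1 - a * b * u ^+ 2) *: 1%:M - (c * u) *: D.
have coef : 1 - c * u * (k^-1 * (b * u)) = k^-1 * (1 - a * b * u ^+ 2).
  apply: (mulfI kn0); rewrite mulrBr mulr1 !mulrA mulfV // mul1r [k * _]mulrC -!mulrA.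
  rewrite [u * (k^-1 * _)]mulrCA mulVKf // /k /c; ring.
have EM : 1%:M - d *m ((c * u) *: (Ai *m S *m Ad)) = k^-1 *: M.
  rewrite -scalemxAr E3 scalerA scalerDr scalerA opprD addrA.
  rewrite addrAC -{1}(scale1r 1%:M) -scalerBl -[c * u / k * _]mulrA coef /M scalerBr !scalerA [k^-1 * (c * u)]mulrC.
  done.
rewrite EU det_mulmx sylvester EM detZ /A (det_1mS esym eirr) exprMn -/k.
rewrite expfzDr // -exprnN exprVn mulrA.
done.
Qed.
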